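(* Let $\ket\psi$ be an $n$-qubit pure state and let $T\subseteq\mathbb F_2^{2n}$ be a subspace. Then \[\frac{1}{|T|}\sum_{a\in T}q_\psi(a) = \sum_{x\in T^\perp}p_\psi(x)^2.\]
   Context: For $x=(a,b)\in\mathbb F_2^{2n}$, $W_x = i^{a\cdot b}X^{a_1}Z^{b_1}\otimes\cdots\otimes X^{a_n}Z^{b_n}$ ($a\cdot b$ over the integers), $p_\psi(x)=2^{-n}\braket{\psi|W_x|\psi}^2$, and $q_\psi(x)=\sum_{y\in\mathbb F_2^{2n}}p_\psi(y)p_\psi(x+y)$. The symplectic product is $[x,y]=\sum_{j=1}^n(x_jy_{n+j}+x_{n+j}y_j)\bmod 2$, and $T^\perp=\{a:[x,a]=0\ \forall x\in T\}$. *)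

(* Defs.v *)
From HB Require Import structures.
From mathcomp Require Import all_boot all_order all_algebra all_field.
From mathcomp Require Import mxtens.
Set Implicit Arguments. Unset Strict Implicit. Unset Printing Implicit Defensive.
Import Order.TTheory GRing.Theory Num.Theory.
Local Open Scope ring_scope.

Section Pauli.
(* C plays the role of the complex numbers (any numeric algebraically
   closed field, e.g. algC or complex R). *)
Variable C : numClosedFieldType.

Definition pauliX : 'M[C]_2 := \matrix_(i, j) (i != j)%:R.
Definition pauliZ : 'M[C]_2 := \matrix_(i, j) ((i == j)%:R * (-1) ^+ (nat_of_ord i)).

Fixpoint ktens (n : nat) : ('I_n -> 'M[C]_2) -> 'M[C]_(2 ^ n) :=
  match n return ('I_n -> 'M[C]_2) -> 'M[C]_(2 ^ n) with
  | 0 => fun _ => 1%:M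
  | k.+1 => fun F =>
      castmx (esym (expnS 2 k), esym (expnS 2 k))
             (F ord0 *t ktens (fun j => F (lift ord0 j)))
  end.

(* x = (a,b) in F_2^{2n}: a_j = x_(j), b_j = x_(n+j) *)
Definition xa (n : nat) (x : 'rV['F_2]_(n + n)) (j : 'I_n) : 'F_2 := x 0 (lshift n j).
Definition xb (n : nat) (x : 'rV['F_2]_(n + n)) (j : 'I_n) : 'F_2 := x 0 (rshift n j).

Definition adotb (n : nat) (x : 'rV['F_2]_(n + n)) : nat :=
  (\sum_(j < n) ((xa x j == 1%R) && (xb x j == 1%R)))%N.

Definition W (n : nat) (x : 'rV['F_2]_(n + n)) : 'M[C]_(2 ^ n) :=
  'i ^+ adotb x *:
    ktens (fun j => (if xa x j == 1 then pauliX else 1) *m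
                    (if xb x j == 1 then pauliZ else 1)).

Definition bra (n : nat) (psi : 'cV[C]_(2 ^ n)) : 'rV[C]_(2 ^ n) :=
  (map_mx Num.conj psi)^T.

Definition pure_state (n : nat) (psi : 'cV[C]_(2 ^ n)) : Prop :=
  (bra psi *m psi) 0 0 = 1.

Definition p_psi (n : nat) (psi : 'cV[C]_(2 ^ n)) (x : 'rV['F_2]_(n + n)) : C :=
  (2 ^+ n)^-1 * ((bra psi *m W x *m psi) 0 0) ^+ 2.

Definition q_psi (n : nat) (psi : 'cV[C]_(2 ^ n)) (x : 'rV['F_2]_(n + n)) : C :=
  \sum_(y : 'rV['F_2]_(n + n)) p_psi psi y * p_psi psi (x + y).

End Pauli.

Definition sympl (n : nat) (x y : 'rV['F_2]_(n + n)) : 'F_2 :=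
  \sum_(j < n) (xa x j * xb y j + xb x j * xa y j).

Definition sperp (n : nat) (T : {vspace 'rV['F_2]_(n + n)}) : pred 'rV['F_2]_(n + n) :=
  [pred a | [forall x, (x \in T) ==> (sympl x a == 0)]].

(* Main.v *)
Require Import Defs.
From HB Require Import structures.
From mathcomp Require Import all_boot all_order all_algebra all_field.
From mathcomp Require Import mxtens.
From mathcomp Require Import ring.
Import Order.TTheory GRing.Theory Num.Theory.
Set Implicit Arguments. Unset Strict Implicit. Unset Printing Implicit Defensive.
Local Open Scope ring_scope.

Lemma F2_cases (t : 'F_2) : t = 0 \/ t = 1.
Proof. case: t => [[|[|]]] //= ?; [left|right]; exact: val_inj. Qed.

Lemma F2_addxx (t : 'F_2) : t + t = 0.
Proof. by case: (F2_cases t) => ->; apply: val_inj. Qed.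

Lemma rowF2_addxx n (x : 'rV['F_2]_n) : x + x = 0.
Proof. by apply/matrixP=> i j; rewrite !mxE F2_addxx. Qed.

Definition sgn (C : numClosedFieldType) (t : 'F_2) : C := if t == 0 then 1 else -1.

Lemma sgnD (C : numClosedFieldType) (s t : 'F_2) : sgn C (s + t) = sgn C s * sgn C t.
Proof.
by case: (F2_cases s) => ->; case: (F2_cases t) => ->; rewrite /sgn /= ?mulr1 ?mul1r ?mulrNN ?mulr1.
Qed.

Lemma sgn0 (C : numClosedFieldType) : sgn C 0 = 1.
Proof. by rewrite /sgn eqxx. Qed.

Lemma sgn_sum (C : numClosedFieldType) (I : finType) (F : I -> 'F_2) :
  sgn C (\sum_i F i) = \prod_i sgn C (F i).
Proof. by apply: (big_morph _ (@sgnD C) (sgn0 C)). Qed.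

Definition chi (C : numClosedFieldType) n (a x : 'rV['F_2]_(n + n)) : C := sgn C (sympl a x).

Lemma symplDl n (a b x : 'rV['F_2]_(n + n)) : sympl (a + b) x = sympl a x + sympl b x.
Proof.
rewrite /sympl -big_split /=; apply: eq_bigr => j _.
rewrite /xa /xb !mxE; ring.
Qed.

Lemma symplC n (a x : 'rV['F_2]_(n + n)) : sympl a x = sympl x a.
Proof. by rewrite /sympl; apply: eq_bigr => j _; ring. Qed.

Lemma symplDr n (a b x : 'rV['F_2]_(n + n)) : sympl x (a + b) = sympl x a + sympl x b.
Proof. by rewrite !(symplC x) symplDl. Qed.

Lemma chiDl C n (a b x : 'rV['F_2]_(n + n)) : chi C (a + b) x = chi C a x * chi C b x.
Proof. by rewrite /chi symplDl sgnD. Qed.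
Lemma chiDr C n (a b x : 'rV['F_2]_(n + n)) : chi C x (a + b) = chi C x a * chi C x b.
Proof. by rewrite /chi symplDr sgnD. Qed.

Lemma sum_chi_zero C n (A : pred 'rV['F_2]_(n + n)) (x y0 : 'rV['F_2]_(n + n)) :
  (forall a, (a + y0 \in A) = (a \in A)) -> chi C y0 x = -1 ->
  \sum_(a | a \in A) chi C a x = 0.
Proof.
move=> HA Hy.
have inv : bijective (fun a : 'rV['F_2]_(n + n) => a + y0).
  by exists (fun a => a + y0) => a; rewrite -addrA rowF2_addxx addr0.
have E : \sum_(a | a \in A) chi C a x = - \sum_(a | a \in A) chi C a x.
  rewrite -sumrN {1}(reindex _ (onW_bij _ inv)) /=.
  apply: eq_big => a; first by rewrite HA.
  by move=> _; rewrite chiDl Hy mulrN1.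
have : (2 : C) * \sum_(a | a \in A) chi C a x = 0.
  rewrite mulrDl mul1r {1}E addNr //=.
by move/eqP; rewrite mulf_eq0 pnatr_eq0 /= => /eqP.
Qed.

Lemma sum_chi_T C n (T : {vspace 'rV['F_2]_(n + n)}) (x : 'rV['F_2]_(n + n)) :
  \sum_(a | a \in T) chi C a x = (x \in sperp T)%:R * #|[set a | a \in T]|%:R.
Proof.
case: (boolP (x \in sperp T)) => Hx.
  rewrite mul1r -sumr_const /=.
  rewrite [RHS](eq_bigl (fun a => a \in T)); last by move=> a; rewrite !inE.
  apply: eq_bigr => a aT.
  move: Hx; rewrite inE => /forallP /(_ a) /implyP /(_ aT) /eqP.
  by rewrite /chi => ->; rewrite sgn0.
rewrite mul0r.
move: Hx; rewrite inE negb_forall => /existsP [a0]; rewrite negb_imply => /andP [a0T].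
move=> H; apply: (@sum_chi_zero _ _ _ _ a0).
  move=> a; apply/idP/idP => H1.
    by rewrite -[a]addr0 -(rowF2_addxx a0) addrA memvD.
  by rewrite memvD.
rewrite /chi /sgn; case: (F2_cases (sympl a0 x)) H => -> //.
Qed.


Lemma sum_delta (R : pzRingType) m (j : 'I_m) (F : 'I_m -> R) :
  \sum_(k < m) (k == j)%:R * F k = F j.
Proof.
rewrite (bigD1 j) //= eqxx mul1r big1 ?addr0 // => k /negbTE ->; by rewrite mul0r.
Qed.

Lemma sympl_delta_r n (j : 'I_n) (w : 'rV['F_2]_(n + n)) :
  sympl (delta_mx 0 (rshift n j)) w = xa w j.
Proof.
rewrite /sympl /xa /xb.
under eq_bigr => k _ do rewrite !mxE eqxx /= eq_lrshift eq_rshift mul0r add0r.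
by rewrite sum_delta.
Qed.

Lemma sympl_delta_l n (j : 'I_n) (w : 'rV['F_2]_(n + n)) :
  sympl (delta_mx 0 (lshift n j)) w = xb w j.
Proof.
rewrite /sympl /xa /xb.
under eq_bigr => k _ do rewrite !mxE eqxx /= eq_rlshift eq_lshift mul0r addr0.
by rewrite sum_delta.
Qed.

Lemma sperp_full n (w : 'rV['F_2]_(n + n)) : (w \in sperp fullv) = (w == 0).
Proof.
apply/idP/idP; last first.
  move/eqP=> ->; rewrite inE; apply/forallP => y; apply/implyP => _.
  by rewrite /sympl big1 // => j _; rewrite /xa /xb !mxE !mulr0 addr0.
rewrite inE => /forallP H; apply/eqP/matrixP => i k; rewrite [i]ord1 mxE.
rewrite -(splitK k); case: (split k) => j /=.
  have := H (delta_mx 0 (rshift n j)); rewrite memvf /= sympl_delta_r.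
  by move/eqP.
have := H (delta_mx 0 (lshift n j)); rewrite memvf /= sympl_delta_l.
by move/eqP.
Qed.

Lemma card_rows n : #|[set a : 'rV['F_2]_(n + n) | a \in (fullv : {vspace 'rV['F_2]_(n + n)})]| = (2 ^ (n + n))%N.
Proof.
rewrite (eq_card (B := predT)); last by move=> a; rewrite !inE memvf.
by rewrite cardT /= -cardE card_mx card_Fp // mul1n.
Qed.

Lemma sum_chi_full C n (w : 'rV['F_2]_(n + n)) :
  \sum_(a : 'rV['F_2]_(n + n)) chi C a w = (w == 0)%:R * (2 ^ (n + n))%:R.
Proof.
rewrite -card_rows -sperp_full -sum_chi_T.
by apply: eq_bigl => a; rewrite memvf.
Qed.


Definition Pm (C : numClosedFieldType) (s : 'F_2 * 'F_2) : 'M[C]_2 :=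
   ((if s.1 == 1 then pauliX C else 1) *m (if s.2 == 1 then pauliZ C else 1)).
Definition ee (s : 'F_2 * 'F_2) : nat := ((s.1 == 1) && (s.2 == 1)).
Definition w1 (C : numClosedFieldType) (s : 'F_2 * 'F_2) : 'M[C]_2 :=
  'i ^+ ee s *: Pm C s.

Definition I2 (C : numClosedFieldType) : 'M[C]_2 := \matrix_(i, j) (i == j)%:R.
Lemma oneI2 (C : numClosedFieldType) : (1 : 'M[C]_2) = I2 C.
Proof. by apply/matrixP => i j; rewrite !mxE. Qed.

Lemma Pconj C (s t : 'F_2 * 'F_2) :
  Pm C s *m Pm C t *m Pm C s = ((-1) ^+ ee s * sgn C (s.1 * t.2 + s.2 * t.1)) *: Pm C t.
Proof.
case: s => [s1 s2]; case: t => [t1 t2] /=.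
case: (F2_cases s1) => ->; case: (F2_cases s2) => ->;
case: (F2_cases t1) => ->; case: (F2_cases t2) => ->;
apply/matrixP => i j; rewrite /Pm /ee /pauliX /pauliZ /sgn /= ?oneI2 /I2.
all: do 4 rewrite ?mxE ?big_ord_recl ?big_ord0.
all: case: i => [[|[|//]]] ?; case: j => [[|[|//]]] ? /=.
all: rewrite /bump /=; ring.
Qed.


Lemma sumF2 (R : nmodType) (F : 'F_2 -> R) : \sum_(t : 'F_2) F t = F 0 + F 1.
Proof.
change (\sum_(t : 'I_2) F t = F 0 + F 1).
rewrite !big_ord_recl big_ord0 addr0; congr (F _ + F _); exact: val_inj.
Qed.

Lemma sum_pairF2 (R : nmodType) (F : 'F_2 * 'F_2 -> R) :
  \sum_(s : 'F_2 * 'F_2) F s = F (0,0) + F (0,1) + F (1,0) + F (1,1).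
Proof.
transitivity (\sum_(p : 'F_2 * 'F_2) F (p.1, p.2)); first by apply: eq_bigr => [[a b]].
by rewrite -(pair_bigA _ (fun a b => F (a, b))) !sumF2 !addrA.
Qed.

Lemma w1_entry (C : numClosedFieldType) s i j : w1 C s i j = 'i ^+ ee s * Pm C s i j.
Proof. by rewrite /w1 mxE. Qed.

Lemma w1w1 (C : numClosedFieldType) s i j k l :
  w1 C s i j * w1 C s k l = (-1) ^+ ee s * (Pm C s i j * Pm C s k l).
Proof. by rewrite !w1_entry mulrACA -exprMn -expr2 sqrCi. Qed.

Lemma Pcomplete (C : numClosedFieldType) (i j k l : 'I_2) :
  \sum_(s : 'F_2 * 'F_2) w1 C s i j * w1 C s k l = 2 * (i == l)%:R * (j == k)%:R.
Proof.
under eq_bigr do rewrite w1w1.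
rewrite sum_pairF2 /ee /Pm /pauliX /pauliZ /= ?oneI2 /I2.
do 3 rewrite ?mxE ?big_ord_recl ?big_ord0.
case: i => [[|[|//]]] ?; case: j => [[|[|//]]] ?; case: k => [[|[|//]]] ?; case: l => [[|[|//]]] ? /=.
all: rewrite /bump /=.
all: rewrite ?expr0 ?expr1; ring.
Qed.


Lemma castmx_mulmx (R : pzRingType) m m' (e : m = m') (A B : 'M[R]_m) :
  castmx (e, e) A *m castmx (e, e) B = castmx (e, e) (A *m B).
Proof. by case: m' / e; rewrite !castmx_id. Qed.

Lemma castmx_scale (R : pzRingType) m m' (e : m = m') c (A : 'M[R]_m) :
  castmx (e, e) (c *: A) = c *: castmx (e, e) A.
Proof. by case: m' / e; rewrite !castmx_id. Qed.

Lemma tensZl (R : comPzRingType) m n p q c (A : 'M[R]_(m, n)) (B : 'M[R]_(p, q)) :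
  (c *: A) *t B = c *: (A *t B).
Proof. by apply/matrixP => i j; rewrite !mxE mulrA. Qed.

Lemma tensZr (R : comPzRingType) m n p q c (A : 'M[R]_(m, n)) (B : 'M[R]_(p, q)) :
  A *t (c *: B) = c *: (A *t B).
Proof. by apply/matrixP => i j; rewrite !mxE mulrCA. Qed.

Lemma ktens_mul (C : numClosedFieldType) n (F G : 'I_n -> 'M[C]_2) :
  ktens F *m ktens G = ktens (fun j => F j *m G j).
Proof.
elim: n F G => [|n IH] F G /=; first by rewrite mulmx1.
by rewrite castmx_mulmx tensmx_mul IH.
Qed.

Lemma ktens_scale (C : numClosedFieldType) n (c : 'I_n -> C) (F : 'I_n -> 'M[C]_2) :
  ktens (fun j => c j *: F j) = (\prod_j c j) *: ktens F.
Proof.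
elim: n c F => [|n IH] c F /=; first by rewrite big_ord0 scale1r.
by rewrite IH tensZl tensZr scalerA big_ord_recl castmx_scale mulrC.
Qed.

Lemma ktens_ext (C : numClosedFieldType) n (F G : 'I_n -> 'M[C]_2) :
  (forall j, F j = G j) -> ktens F = ktens G.
Proof.
elim: n F G => [|n IH] F G H //=.
by rewrite H (IH _ (fun j => G (lift ord0 j))).
Qed.

Lemma W_ktens (C : numClosedFieldType) n (x : 'rV['F_2]_(n + n)) :
  W C x = ktens (fun j => w1 C (xa x j, xb x j)).
Proof.
rewrite /w1 ktens_scale prodrXr /W /adotb /ee /=.
by congr (_ *: _); apply: eq_bigr.
Qed.

Lemma w1_conj (C : numClosedFieldType) (s t : 'F_2 * 'F_2) :
  w1 C s *m w1 C t *m w1 C s = sgn C (s.1 * t.2 + s.2 * t.1) *: w1 C t.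
Proof.
rewrite /w1 -!scalemxAl -!scalemxAr !scalerA -scalemxAl Pconj !scalerA.
congr (_ *: _).
set u := 'i ^+ ee s; set it := 'i ^+ ee t; set v := (-1) ^+ ee s; set sg := sgn C _.
have hu : u * u = v by rewrite /u /v -exprMn -expr2 sqrCi.
have hv : v * v = 1 by rewrite /v -exprMn mulrNN mulr1 expr1n.
transitivity ((u * u) * v * (sg * it)); first ring.
by rewrite hu hv mul1r.
Qed.

Lemma W_conj (C : numClosedFieldType) n (a x : 'rV['F_2]_(n + n)) :
  W C a *m W C x *m W C a = chi C a x *: W C x.
Proof.
rewrite !W_ktens !ktens_mul.
rewrite (ktens_ext (G := fun j => sgn C (xa a j * xb x j + xb a j * xa x j) *: w1 C (xa x j, xb x j))); last by move=> j; rewrite w1_conj.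
by rewrite ktens_scale /chi /sympl sgn_sum.
Qed.


Definition fcons (T : finType) n (t : T) (g : {ffun 'I_n -> T}) : {ffun 'I_n.+1 -> T} :=
  [ffun i => match unlift ord0 i with None => t | Some j => g j end].

Lemma fcons0 (T : finType) n (t : T) (g : {ffun 'I_n -> T}) : fcons t g ord0 = t.
Proof. by rewrite ffunE unlift_none. Qed.

Lemma fconsS (T : finType) n (t : T) (g : {ffun 'I_n -> T}) j : fcons t g (lift ord0 j) = g j.
Proof. by rewrite ffunE liftK. Qed.

Lemma sum_ffunS (R : nmodType) (T : finType) n (G : {ffun 'I_n.+1 -> T} -> R) :
  \sum_(f : {ffun 'I_n.+1 -> T}) G f = \sum_(t : T) \sum_(g : {ffun 'I_n -> T}) G (fcons t g).
Proof.
rewrite (pair_big (fun _ => true) (fun _ => true) (fun t g => G (fcons t g))) /=.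
have hb : bijective (fun p : T * {ffun 'I_n -> T} => fcons p.1 p.2).
  exists (fun f : {ffun 'I_n.+1 -> T} => (f ord0, [ffun j => f (lift ord0 j)])).
    move=> [t g] /=; rewrite fcons0; congr (_, _); apply/ffunP => j.
    by rewrite ffunE fconsS.
  move=> f; apply/ffunP => i; rewrite ffunE /=.
  by case: unliftP => [j ->|->]; rewrite ?ffunE.
by rewrite (reindex _ (onW_bij _ hb)).
Qed.

Lemma tens_complete (C : numClosedFieldType) m (Fam : finType) (K : Fam -> 'M[C]_m) c :
  (forall i j k l, \sum_g K g i j * K g k l = c * (i == l)%:R * (j == k)%:R) ->
  forall I J K' L : 'I_(2 * m),
  \sum_(t : 'F_2 * 'F_2) \sum_g (w1 C t *t K g) I J * (w1 C t *t K g) K' L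
   = (2 * c) * (I == L)%:R * (J == K')%:R.
Proof.
move=> H I J K' L.
case: (mxtens_indexP I) => i0 i1; case: (mxtens_indexP J) => j0 j1.
case: (mxtens_indexP K') => k0 k1; case: (mxtens_indexP L) => l0 l1.
under eq_bigr do under eq_bigr do rewrite !tensmxE mulrACA.
under eq_bigr do rewrite -mulr_sumr.
rewrite -mulr_suml Pcomplete H.
rewrite !(inj_eq (can_inj (@mxtens_indexK _ _))) !xpair_eqE -!mulnb !natrM /=.
ring.
Qed.

Lemma ktensS (C : numClosedFieldType) n (F : 'I_n.+1 -> 'M[C]_2) :
  ktens F = castmx (esym (expnS 2 n), esym (expnS 2 n)) (F ord0 *t ktens (fun j => F (lift ord0 j))).
Proof. by []. Qed.

Lemma ktens_fcons (C : numClosedFieldType) n t (g : {ffun 'I_n -> 'F_2 * 'F_2}) :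
  ktens (fun q => w1 C (fcons t g q)) =
  castmx (esym (expnS 2 n), esym (expnS 2 n)) (w1 C t *t ktens (fun q => w1 C (g q))).
Proof.
rewrite ktensS fcons0 (ktens_ext (G := fun q => w1 C (g q))) //.
by move=> q; rewrite fconsS.
Qed.

Lemma ktens_complete (C : numClosedFieldType) n (i j k l : 'I_(2 ^ n)) :
  \sum_(f : {ffun 'I_n -> 'F_2 * 'F_2})
     ktens (fun q => w1 C (f q)) i j * ktens (fun q => w1 C (f q)) k l
  = 2 ^+ n * (i == l)%:R * (j == k)%:R.
Proof.
elim: n i j k l => [|n IH] i j k l.
  rewrite (eq_bigr (fun _ => (1%:M : 'M[C]_1) i j * (1%:M : 'M[C]_1) k l)) //.
  rewrite sumr_const card_ffun card_ord expn0 [i]ord1 [j]ord1 [k]ord1 [l]ord1 !mxE /=.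
  by rewrite mulr1n !mulr1.
rewrite (sum_ffunS (fun f : {ffun 'I_n.+1 -> 'F_2 * 'F_2} => ktens (fun q => w1 C (f q)) i j * ktens (fun q => w1 C (f q)) k l)).
under eq_bigr => t _ do under eq_bigr => g _ do rewrite !ktens_fcons !castmxE.
rewrite (tens_complete (K := fun g : {ffun 'I_n -> 'F_2 * 'F_2} => ktens (fun q => w1 C (g q))) (c := 2 ^+ n)); last exact: IH.
rewrite !(inj_eq (@cast_ord_inj _ _ _)) exprS; ring.
Qed.



Definition F2R n (f : {ffun 'I_n -> 'F_2 * 'F_2}) : 'rV['F_2]_(n + n) :=
  row_mx (\row_q (f q).1) (\row_q (f q).2).

Lemma F2R_bij n : bijective (@F2R n).
Proof.
exists (fun x => [ffun q => (xa x q, xb x q)]).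
  move=> f; apply/ffunP => q; rewrite ffunE /xa /xb /F2R row_mxEl row_mxEr !mxE.
  by case: (f q).
move=> x; apply/matrixP => i k; rewrite [i]ord1 /F2R.
rewrite -(splitK k); case: (split k) => j /=.
  by rewrite row_mxEl mxE ffunE.
by rewrite row_mxEr mxE ffunE.
Qed.

Lemma W_F2R (C : numClosedFieldType) n f : W C (@F2R n f) = ktens (fun q => w1 C (f q)).
Proof.
rewrite W_ktens; apply: ktens_ext => q.
by rewrite /xa /xb /F2R row_mxEl row_mxEr !mxE; case: (f q).
Qed.

Lemma W_complete (C : numClosedFieldType) n (i j k l : 'I_(2 ^ n)) :
  \sum_(x : 'rV['F_2]_(n + n)) W C x i j * W C x k l = 2 ^+ n * (i == l)%:R * (j == k)%:R.
Proof.
rewrite (reindex _ (onW_bij _ (@F2R_bij n))) /=.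
under eq_bigr do rewrite W_F2R.
exact: ktens_complete.
Qed.

Lemma mxE3 (R : comPzRingType) m (u : 'rV[R]_m) (M : 'M[R]_m) (v : 'cV[R]_m) :
  (u *m M *m v) 0 0 = \sum_i \sum_j u 0 i * M i j * v j 0.
Proof.
rewrite mxE; under eq_bigr do rewrite mxE mulr_suml.
by rewrite exchange_big.
Qed.

Lemma sum_delta2 (R : pzRingType) m (j : 'I_m) (F : 'I_m -> R) :
  \sum_(k < m) (j == k)%:R * F k = F j.
Proof.
rewrite (bigD1 j) //= eqxx mul1r big1 ?addr0 // => k; rewrite eq_sym => /negbTE ->; by rewrite mul0r.
Qed.

Lemma W_bil (C : numClosedFieldType) n (u1 u2 : 'rV[C]_(2 ^ n)) (v1 v2 : 'cV[C]_(2 ^ n)) :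
  \sum_(x : 'rV['F_2]_(n + n)) (u1 *m W C x *m v1) 0 0 * (u2 *m W C x *m v2) 0 0
  = 2 ^+ n * (u1 *m v2) 0 0 * (u2 *m v1) 0 0.
Proof.
under eq_bigr do rewrite !mxE3 mulr_suml; under eq_bigr do under eq_bigr do rewrite mulr_suml.
under eq_bigr do under eq_bigr do under eq_bigr do rewrite mulr_sumr.
under eq_bigr do under eq_bigr do under eq_bigr do under eq_bigr do rewrite mulr_sumr.
rewrite exchange_big; under eq_bigr do rewrite exchange_big.
under eq_bigr do under eq_bigr do rewrite exchange_big.
under eq_bigr do under eq_bigr do under eq_bigr do rewrite exchange_big.
have E : forall (a W1 b c W2 d : C), a * W1 * b * (c * W2 * d) = (a * b * c * d) * (W1 * W2).
  by move=> *; ring.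
under eq_bigr do under eq_bigr do under eq_bigr do under eq_bigr do rewrite (eq_bigr _ (fun x _ => E _ _ _ _ _ _)) -mulr_sumr W_complete.
have E2 : forall (a b c d N e1 e2 : C), a * b * c * d * (N * e1 * e2) = e2 * (e1 * (N * a * b * c * d)).
  by move=> *; ring.
under eq_bigr do under eq_bigr do under eq_bigr do under eq_bigr do rewrite E2.
under eq_bigr do under eq_bigr do under eq_bigr do rewrite -mulr_sumr sum_delta2.
under eq_bigr do under eq_bigr do rewrite sum_delta2.
rewrite !mxE -mulrA mulr_suml mulr_sumr; apply: eq_bigr => i _.
rewrite mulr_sumr mulr_sumr; apply: eq_bigr => k _; ring.
Qed.


Lemma N_neq0 (C : numClosedFieldType) n : (2 ^+ n : C) != 0.
Proof. by rewrite expf_neq0 // pnatr_eq0. Qed.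

Lemma scal_entry (C : numClosedFieldType) m (u : 'rV[C]_m) (M : 'M[C]_m) (v : 'cV[C]_m) c :
  (u *m (c *: M) *m v) 0 0 = c * (u *m M *m v) 0 0.
Proof. by rewrite -scalemxAr -scalemxAl mxE. Qed.

Lemma p_fourier (C : numClosedFieldType) n (psi : 'cV[C]_(2 ^ n)) (a : 'rV['F_2]_(n + n)) :
  \sum_x chi C a x * p_psi psi x = 2 ^+ n * p_psi psi a.
Proof.
rewrite /p_psi.
set u := bra psi.
have E : forall x, chi C a x * ((2 ^+ n)^-1 * (u *m W C x *m psi) 0 0 ^+ 2) =
   (2 ^+ n)^-1 * ((u *m W C x *m psi) 0 0 * ((u *m W C a) *m W C x *m (W C a *m psi)) 0 0).
  move=> x.
  have -> : (u *m W C a) *m W C x *m (W C a *m psi) = u *m (W C a *m W C x *m W C a) *m psi.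
    by rewrite !mulmxA.
  rewrite W_conj scal_entry; ring.
rewrite (eq_bigr _ (fun x _ => E x)) -mulr_sumr W_bil.
rewrite !mulmxA; field; exact: N_neq0.
Qed.

Lemma addrow_eq0 n (x z : 'rV['F_2]_n) : (x + z == 0) = (x == z).
Proof.
apply/eqP/eqP => [H|->]; last exact: rowF2_addxx.
by rewrite -[x]addr0 -(rowF2_addxx z) addrA H add0r.
Qed.

Lemma sum_delta_fin (R : pzRingType) (T : finType) (j : T) (F : T -> R) :
  \sum_k (j == k)%:R * F k = F j.
Proof.
rewrite (bigD1 j) //= eqxx mul1r big1 ?addr0 // => k; rewrite eq_sym => /negbTE ->; by rewrite mul0r.
Qed.

Lemma q_fourier (C : numClosedFieldType) n (psi : 'cV[C]_(2 ^ n)) (a : 'rV['F_2]_(n + n)) :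
  q_psi psi a = \sum_x p_psi psi x ^+ 2 * chi C a x.
Proof.
set p := p_psi psi.
set N : C := 2 ^+ n.
have hN : N != 0 by exact: N_neq0.
have hp : forall y, p y = N^-1 * \sum_x chi C y x * p x.
  by move=> y; rewrite p_fourier mulrA mulVf // mul1r.
rewrite /q_psi -/p.
transitivity (\sum_y \sum_x \sum_z (N^-1 * N^-1) * (p x * p z * chi C a z) * (chi C y x * chi C y z)).
  apply: eq_bigr => y _; rewrite [p y]hp [p (a + y)]hp.
  rewrite mulr_sumr mulr_suml; apply: eq_bigr => x _.
  rewrite mulr_sumr mulr_sumr; apply: eq_bigr => z _.
  rewrite chiDl; ring.
rewrite exchange_big; apply: eq_bigr => x _.
rewrite exchange_big.
under eq_bigr do rewrite -mulr_sumr.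
under eq_bigr do under eq_bigr do rewrite -chiDr.
under eq_bigr do rewrite sum_chi_full addrow_eq0.
have E : forall z, N^-1 * N^-1 * (p x * p z * chi C a z) * ((x == z)%:R * (2 ^ (n + n))%:R)
   = (x == z)%:R * (N^-1 * N^-1 * (p x * p z * chi C a z) * (2 ^ (n + n))%:R).
  by move=> z; ring.
rewrite (eq_bigr _ (fun z _ => E z)) sum_delta_fin.
rewrite expnD natrM natrX.
rewrite -/N. field. exact: hN.
Qed.

Unset Implicit Arguments.
Theorem theorem3p2 (C : numClosedFieldType) (n : nat)
  (psi : 'cV[C]_(2 ^ n)) (Hpsi : pure_state psi)
  (T : {vspace 'rV['F_2]_(n + n)}) :
  (#|[set a : 'rV['F_2]_(n + n) | a \in T]|%:R)^-1
    * \sum_(a : 'rV['F_2]_(n + n) | a \in T) q_psi psi a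
  = \sum_(x : 'rV['F_2]_(n + n) | x \in sperp T) p_psi psi x ^+ 2.
Proof.
have hT : (#|[set a : 'rV['F_2]_(n + n) | a \in T]|%:R : C) != 0.
  rewrite pnatr_eq0 -lt0n card_gt0; apply/set0Pn; exists 0; by rewrite inE mem0v.
under eq_bigr do rewrite (@q_fourier C).
rewrite exchange_big /=.
under eq_bigr do rewrite -mulr_sumr sum_chi_T.
rewrite mulr_sumr [RHS]big_mkcond /=; apply: eq_bigr => x _.
case: (x \in sperp T); last by rewrite mul0r mulr0 mulr0.
by rewrite mul1r mulrCA mulVf // mulr1.
Qed.
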